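(* Let $n\ge 2$, $\ell<n$. There are unique unital $\ast$-homomorphisms $\pi^{(+\ell)},\pi^{(-\ell)}:C^\ast(Q_n)\to C^\ast(Q_{n-1})$ with $\pi^{(+\ell)}(p_x)=\tilde p_y$ if $x=(y\#0)^{(+\ell)}$ for some vertex $y$ of $Q_{n-1}$ and $\pi^{(+\ell)}(p_x)=0$ otherwise, and $\pi^{(-\ell)}(p_x)=\tilde p_y$ if $x=y^{(-\ell)}$ for some vertex $y$ of $Q_{n-1}$ and $\pi^{(-\ell)}(p_x)=0$ otherwise. Moreover, for $\mathbf s=[s_0,\dots,s_{n-2}]\in\Delta_{n-2}$ and $\mathbf t := [s_0,\dots,s_{\ell-1},0,s_\ell,\dots,s_{n-2}]\in\Delta_{n-1}$, the representation $\rho_{\mathbf t}$ of $C^\ast(Q_n)$ is unitarily equivalent to $(\rho_{\mathbf s}\circ\pi^{(+\ell)})\oplus(\rho_{\mathbf s}\circ\pi^{(-\ell)})$.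
   Context: For $m\ge1$, identify integers $0\le i<2^m$ with their $m$-digit binary representations $i=\sum_k i_k2^k$; $\mathrm{par}_k(i)=\sum_{r=0}^k i_r\bmod 2$, and $i\#k$ is $i$ with its $k$-th digit flipped. The hypercube $Q_m$ has vertex classes $U_m=\{i<2^m\mid \mathrm{par}_{m-1}(i)=0\}$, $V_m=\{j<2^m\mid\mathrm{par}_{m-1}(j)=1\}$, with $i\in U_m$, $j\in V_m$ adjacent iff $j=i\#k$ for some $k<m$. $C^\ast(Q_m)$ is the universal unital C*-algebra generated by projections $p_x$ ($x\in U_m\cup V_m$) with $\sum_{u\in U_m}p_u=1=\sum_{v\in V_m}p_v$ and $p_up_v=0$ for non-adjacent $u,v$; the generators of $C^\ast(Q_{n-1})$ are written $\tilde p_y$. For $y=\sum_{k=0}^{n-2}y_k2^k<2^{n-1}$ and $\ell<n$, $y^{(+\ell)}$ (resp. $y^{(-\ell)}$) is the number $<2^n$ obtained by inserting a digit $1$ (resp. $0$) at position $\ell$ of the binary representation of $y$: $y^{(\pm\ell)} = \sum_{k<\ell}y_k2^k + \epsilon 2^\ell + \sum_{k=\ell}^{n-2}y_k2^{k+1}$ with $\epsilon=1$ resp. $0$. $\Delta_{m-1}=\{[t_0,\dots,t_{m-1}]\mid t_k\ge0,\sum t_k=1\}$. For $\mathbf t\in\Delta_{m-1}$, let $c_{\mathbf t}(ij)=(-1)^{\mathrm{par}_k(i)}\sqrt{t_k}$ for $i\in U_m$, $j=i\#k$, and $c_{\mathbf t}(ij)=0$ for non-adjacent $i,j$; $\rho_{\mathbf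 t}:C^\ast(Q_m)\to M_{U_m}$ is the representation with $\rho_{\mathbf t}(p_i)=E_{ii}$ ($i\in U_m$) and $\rho_{\mathbf t}(p_j)=[c_{\mathbf t}(i_1j)\overline{c_{\mathbf t}(i_2j)}]_{i_1,i_2\in U_m}$ ($j\in V_m$). *)

(* Defs.v *)
From HB Require Import structures.
From mathcomp Require Import all_boot all_order all_algebra.
From mathcomp Require Import complex.
Set Implicit Arguments. Unset Strict Implicit. Unset Printing Implicit Defensive.
Import Order.TTheory GRing.Theory Num.Theory.
Local Open Scope ring_scope.

Definition bit (i k : nat) : bool := odd (i %/ 2 ^ k).
Definition par (k i : nat) : bool := odd (\sum_(r < k.+1) bit i r).
Definition flip (i k : nat) : nat := if bit i k then (i - 2 ^ k)%N else (i + 2 ^ k)%N.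

(* y^{(+l)} (e = true) and y^{(-l)} (e = false): insert digit e at position l *)
Definition ins (l : nat) (e : bool) (y : nat) : nat :=
  (y %% 2 ^ l + e * 2 ^ l + (y %/ 2 ^ l) * 2 ^ l.+1)%N.

Definition adj (m u v : nat) : bool := [exists k : 'I_m, v == flip u k].

(* Defining relations of C^*(Q_m) for a family q of elements of a ring with
   involution (A, star): q x (x < 2^m) are projections, the U_m-sum and the
   V_m-sum equal 1, and p_u p_v = 0 for u in U_m, v in V_m non-adjacent. *)
Definition Qrel (m : nat) (A : nzRingType) (star : A -> A) (q : nat -> A) : Prop :=
  [/\ forall x, (x < 2 ^ m)%N -> q x * q x = q x /\ star (q x) = q x,
      \sum_(x < 2 ^ m | ~~ par m.-1 x) q x = 1,
      \sum_(x < 2 ^ m | par m.-1 x) q x = 1 &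
      forall u v, (u < 2 ^ m)%N -> (v < 2 ^ m)%N -> ~~ par m.-1 u -> par m.-1 v ->
        ~~ adj m u v -> q u * q v = 0].

(* the vertex y of Q_{n-1} with x = (y#0)^{(+l)}, resp. x = y^{(-l)}, if any *)
Definition preP (n l x : nat) : option nat :=
  omap val [pick y : 'I_(2 ^ n.-1) | x == ins l true (flip y 0)].
Definition preM (n l x : nat) : option nat :=
  omap val [pick y : 'I_(2 ^ n.-1) | x == ins l false y].

Definition img (A : nmodType) (q : nat -> A) (o : option nat) : A :=
  if o is Some y then q y else 0.

(* the standard simplex Delta_{m-1} (t indexed by k < m) *)
Definition simplex (R : numDomainType) (m : nat) (t : nat -> R) : Prop :=
  (forall k, (k < m)%N -> 0 <= t k) /\ \sum_(k < m) t k = 1.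

Definition tins (R : numDomainType) (l : nat) (s : nat -> R) : nat -> R :=
  fun k => if (k < l)%N then s k else if k == l then 0 else s k.-1.

Definition cc (R : rcfType) (m : nat) (t : nat -> R) (i j : nat) : R[i] :=
  if [pick k : 'I_m | j == flip i k] is Some k
  then (-1) ^+ par k i * real_complex R (Num.sqrt (t k)) else 0.

(* enumeration of U_m by 'I_(2^(m-1)) (the basis of C^{U_m}):
   a |-> the vertex with digits 1..m-1 those of a and digit 0 = parity of a *)
Definition uenum (m a : nat) : nat := (2 * a + par m.-1 a)%N.

(* rho_t : C^*(Q_m) -> M_{U_m}, on generators (matrices w.r.t. basis uenum) *)
Definition rho (R : rcfType) (m : nat) (t : nat -> R) (x : nat) : 'M[R[i]]_(2 ^ m.-1) :=
  \matrix_(a, b)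
    if ~~ par m.-1 x then ((uenum m a == x) && (uenum m b == x))%:R
    else cc m t (uenum m a) x * conjc (cc m t (uenum m b) x).

Definition adjmx (R : rcfType) p q (M : 'M[R[i]]_(p, q)) : 'M[R[i]]_(q, p) :=
  (map_mx (@conjc R) M)^T.

(* Main.v *)
Require Import Defs.
From HB Require Import structures.
From mathcomp Require Import all_boot all_order all_algebra.
From mathcomp Require Import complex.
From mathcomp Require Import zify ring.
Import Order.TTheory GRing.Theory Num.Theory.

Lemma bit0E i : bit i 0 = odd i.
Proof. by rewrite /bit expn0 divn1. Qed.

Lemma bitSE i k : bit i k.+1 = bit (i %/ 2) k.
Proof. by rewrite /bit expnS divnMA. Qed.

Lemma bit_div i l k : bit (i %/ 2 ^ l) k = bit i (k + l).
Proof. by rewrite /bit -divnMA -expnD addnC. Qed.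

Lemma eq_bits a b : (forall k, bit a k = bit b k) -> a = b.
Proof.
have: forall N a b, a + b <= N -> (forall k, bit a k = bit b k) -> a = b.
  elim=> [|N IH] a0 b0 Hab H; first lia.
  rewrite (divn_eq a0 2) (divn_eq b0 2) !modn2 -!bit0E H; congr (_ * _ + _).
  apply: IH; last by move=> k; rewrite -!bitSE.
  lia.
by move=> /(_ (a + b) a b (leqnn _)).
Qed.

Lemma bit_small a m k : a < 2 ^ m -> m <= k -> bit a k = false.
Proof.
move=> Ha Hk; rewrite /bit divn_small //; apply: leq_trans Ha _.
by rewrite leq_exp2l.
Qed.

Lemma bits_small a m : (forall k, m <= k -> bit a k = false) -> a < 2 ^ m.
Proof.
move=> H.
have H0 : a %/ 2 ^ m = 0.
  apply: eq_bits => k; rewrite bit_div H ?leq_addl //.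
  by rewrite /bit div0n.
rewrite (divn_eq a (2 ^ m)) H0 mul0n add0n ltn_mod expn_gt0 //.
Qed.

Lemma bit_key r k q (c : bool) j : r < 2 ^ k ->
  bit (r + 2 ^ k * (2 * q + c)) j =
  if j < k then bit r j else if j == k then c else bit q (j - k.+1).
Proof.
move=> Hr; case: ltnP => Hjk.
  rewrite /bit -(subnK (ltnW Hjk)) expnD [2 ^ _ * 2 ^ j]mulnC -mulnA [2 ^ j * _]mulnC.
  rewrite divnDMl ?expn_gt0 //.
  rewrite oddD oddM oddX /=.
  have -> : (k - j == 0) = false by lia.
  by rewrite /= addbF.
have [d ->] : exists d, j = d + k by exists (j - k); lia.
rewrite /bit expnD [2 ^ d * _]mulnC divnMA [2 ^ k * _]mulnC divnDMl ?expn_gt0 //.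
rewrite (divn_small Hr) add0n.
have -> : (d + k == k) = (d == 0) by lia.
have -> : d + k - k.+1 = d.-1 by lia.
case: d => [|d] /=; first by rewrite expn0 divn1 oddD oddM /=; case: c.
rewrite expnS divnMA; congr (odd (_ %/ _)).
rewrite mulnC divnMDl // divn_small ?addn0 //; by case: c.
Qed.

Lemma bit_decomp i k : i = i %% 2 ^ k + 2 ^ k * (2 * (i %/ 2 ^ k.+1) + bit i k).
Proof.
rewrite expnSr divnMA /bit [2 * _]mulnC -modn2 -divn_eq mulnC addnC -divn_eq //.
Qed.

Lemma bit_mod i k j : j < k -> bit (i %% 2 ^ k) j = bit i j.
Proof.
move=> Hj; rewrite [in RHS](bit_decomp i k) bit_key ?Hj // ltn_mod expn_gt0 //.
Qed.

Lemma flip_decomp i k : flip i k = i %% 2 ^ k + 2 ^ k * (2 * (i %/ 2 ^ k.+1) + ~~ bit i k).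
Proof.
rewrite /flip; case Hb: (bit i k); rewrite {1}(bit_decomp i k) Hb /=;
  move: (i %% 2 ^ k) (i %/ 2 ^ k.+1) (2 ^ k) => a b c; nia.
Qed.

Lemma bit_flip i k j : bit (flip i k) j = (j == k) (+) bit i j.
Proof.
rewrite flip_decomp [in RHS](bit_decomp i k) !bit_key ?ltn_mod ?expn_gt0 //.
case: ltnP => H; first by have -> : (j == k) = false by lia.
case: (j == k); by rewrite ?addNb ?addbF.
Qed.

Lemma ins_decomp l e y : ins l e y = y %% 2 ^ l + 2 ^ l * (2 * (y %/ 2 ^ l) + e).
Proof. rewrite /ins expnS; nia. Qed.

Lemma bit_ins l e y j :
  bit (ins l e y) j = if j < l then bit y j else if j == l then e else bit y j.-1.
Proof.
rewrite ins_decomp bit_key ?ltn_mod ?expn_gt0 //.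
case: ltnP => H; first exact: bit_mod.
case: eqP => // Hne; rewrite bit_div; congr bit; lia.
Qed.

Lemma flipK i k : flip (flip i k) k = i.
Proof. by apply: eq_bits => j; rewrite !bit_flip addbA addbb. Qed.

Lemma flip_inj k : injective (flip^~ k).
Proof. by move=> a b H; rewrite -(flipK a k) H flipK. Qed.

Lemma ins_inj l e : injective (ins l e).
Proof.
move=> y1 y2 H; apply: eq_bits => j.
case: (ltnP j l) => Hj.
  by have := congr1 (bit^~ j) H; rewrite !bit_ins Hj.
have := congr1 (bit^~ j.+1) H; rewrite !bit_ins ltnNge (leqW Hj) /=.
by rewrite (_ : (j.+1 == l) = false) //; lia.
Qed.

Lemma bit_ins_l l e y : bit (ins l e y) l = e.
Proof. by rewrite bit_ins ltnn eqxx. Qed.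

Definition ps (v k : nat) : bool := odd (\sum_(r < k) bit v r).

Lemma parE k i : par k i = ps i k.+1.
Proof. by []. Qed.

Lemma psS v k : ps v k.+1 = ps v k (+) bit v k.
Proof. by rewrite /ps big_ord_recr /= oddD oddb. Qed.

Lemma ps0 v : ps v 0 = false.
Proof. by rewrite /ps big_ord0. Qed.

Lemma ps_flip i j k : ps (flip i j) k = ps i k (+) (j < k).
Proof.
elim: k => [|k IH]; first by rewrite !ps0.
rewrite !psS IH bit_flip.
case: (ltngtP j k) => H.
- have -> : (j < k.+1) = true by lia.
  by case: (ps i k); case: (bit i k).
- have -> : (j < k.+1) = false by lia.
  by case: (ps i k); case: (bit i k).
- by subst; rewrite ltnSn; case: (ps i k); case: (bit i k).
Qed.

Lemma ps_ins l e y k :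
  ps (ins l e y) k = if k <= l then ps y k else ps y k.-1 (+) e.
Proof.
elim: k => [|k IH]; first by rewrite !ps0.
rewrite psS IH bit_ins.
case: (ltngtP k l) => H.
- by rewrite psS.
- case: k H IH => [|k] //= H _; rewrite psS.
  by case: (ps y k); case e; case (bit y k).
- by [].
Qed.

Lemma ps_small a m k : a < 2 ^ m -> m <= k -> ps a k = ps a m.
Proof.
move=> Ha; elim: k => [|k IH]; first by rewrite leqn0 => /eqP ->.
rewrite leq_eqVlt => /orP [/eqP -> //|]; rewrite ltnS => H.
by rewrite psS IH // (bit_small _ _ _ Ha H) addbF.
Qed.

Definition kmap (l i : nat) : nat := if i < l then i else i.+1.
Definition unmap (l k : nat) : nat := if k < l then k else k.-1.

Lemma flip_ins l e z i : flip (ins l e z) (kmap l i) = ins l e (flip z i).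
Proof.
apply: eq_bits => j; rewrite bit_flip !bit_ins !bit_flip /kmap.
case: (ltngtP j l) => Hjl; case: (ltnP i l) => Hil.
all: rewrite /=.
all: try (congr (_ (+) _); apply/idP/idP => /eqP ?; apply/eqP; lia).
all: (rewrite (_ : (j == _) = false) //; apply/negbTE/eqP; lia).
Qed.

Lemma flipC y a b : flip (flip y a) b = flip (flip y b) a.
Proof. by apply: eq_bits => j; rewrite !bit_flip addbCA. Qed.

Lemma kmap_unmap l k : k != l -> kmap l (unmap l k) = k.
Proof. rewrite /kmap /unmap => Hk; case: (ltnP k l) => H; rewrite ?H //; case: ifP; lia. Qed.

Lemma kmap_lt l i m : i < m -> kmap l i < m.+1.
Proof. rewrite /kmap; case: ifP; lia. Qed.

Lemma unmap_lt l k m : k < m.+1 -> l <= m -> k != l -> unmap l k < m.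
Proof. rewrite /unmap => H1 H2 H3; case: ifP; lia. Qed.

Lemma flip_idx_inj u a b : flip u a = flip u b -> a = b.
Proof.
move=> /(congr1 (bit^~ a)); rewrite !bit_flip eqxx.
by case: eqP => // _; case: (bit u a).
Qed.

Lemma flip_small y k m : y < 2 ^ m -> k < m -> flip y k < 2 ^ m.
Proof.
move=> Hy Hk; apply: bits_small => j Hj; rewrite bit_flip (bit_small _ _ _ Hy Hj).
by have -> : (j == k) = false by lia.
Qed.

Lemma ins_small l e z m : z < 2 ^ m -> l <= m -> ins l e z < 2 ^ m.+1.
Proof.
move=> Hz Hl; apply: bits_small => j Hj; rewrite bit_ins.
have -> : (j < l) = false by lia.
have -> : (j == l) = false by lia.
apply: (bit_small _ _ _ Hz); lia.
Qed.

Lemma bit_l_flip_ins l e z k : k != l -> bit (flip (ins l e z) k) l = e.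
Proof. by rewrite bit_flip bit_ins_l eq_sym => /negbTE ->. Qed.

Lemma ins_flip_adj l e z z' k : k != l -> ins l e z' = flip (ins l e z) k ->
  z' = flip z (unmap l k).
Proof.
move=> Hk H; apply: (@ins_inj l e); rewrite H -flip_ins kmap_unmap //.
Qed.

Lemma tins_kmap (R : numDomainType) l (s : nat -> R) i : tins l s (kmap l i) = s i.
Proof.
rewrite /tins /kmap; case: (ltnP i l) => H; rewrite ?H //.
have -> : (i.+1 < l) = false by lia.
by have -> : (i.+1 == l) = false by lia.
Qed.

Lemma tins_l (R : numDomainType) l (s : nat -> R) : tins l s l = 0%R.
Proof. by rewrite /tins ltnn eqxx. Qed.

Lemma par_kmap_ins l e z i : par (kmap l i) (ins l e z) = par i z (+) (e && (l <= i)).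
Proof.
rewrite !parE /kmap; case: (ltnP i l) => H.
  by rewrite ps_ins H andbF addbF.
rewrite ps_ins; have -> : (i.+2 <= l) = false by lia.
by rewrite andbT.
Qed.

Lemma par_flip0 k y : par k (flip y 0) = ~~ par k y.
Proof. by rewrite !parE ps_flip addbT. Qed.

Lemma bit2S a (b : bool) k : bit (2 * a + b) k.+1 = bit a k.
Proof. by rewrite bitSE addnC mulnC divnDMl // divn_small ?add0n //; case: b. Qed.

Lemma ps2 a (b : bool) k : ps (2 * a + b) k.+1 = b (+) ps a k.
Proof.
elim: k => [|k IH].
  by rewrite psS !ps0 bit0E oddD oddM /=; case: b.
by rewrite psS IH psS bit2S addbA.
Qed.


Lemma uenum_small M a : a < 2 ^ M -> uenum M.+1 a < 2 ^ M.+1.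
Proof.
move=> Ha; apply: bits_small => [[|k]] Hk //.
by rewrite /uenum bit2S (bit_small _ _ _ Ha).
Qed.

Lemma uenum_par M a : a < 2 ^ M -> par M (uenum M.+1 a) = false.
Proof.
move=> Ha; rewrite parE /uenum ps2 parE psS (bit_small _ _ _ Ha) //.
by rewrite addbF addbb.
Qed.

Lemma uenumK M a : uenum M.+1 a %/ 2 = a.
Proof. by rewrite /uenum addnC mulnC divnDMl // divn_small ?add0n //; case: (par _ _). Qed.

Lemma uenum_inj M a b : uenum M.+1 a = uenum M.+1 b -> a = b.
Proof. by move=> /(congr1 (divn^~ 2)); rewrite !uenumK. Qed.

Lemma uenum_half M u : u < 2 ^ M.+1 -> par M u = false ->
  u %/ 2 < 2 ^ M /\ uenum M.+1 (u %/ 2) = u.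
Proof.
move=> Hu Hp.
have Hd : u = 2 * (u %/ 2) + odd u by rewrite {1}(divn_eq u 2) modn2 mulnC.
have Hb : u %/ 2 < 2 ^ M.
  apply: bits_small => k Hk; rewrite -bitSE; apply: (bit_small _ _ _ Hu); lia.
split => //.
rewrite /uenum {3}Hd; congr (_ + _); congr nat_of_bool.
move: Hp; rewrite parE {1}Hd ps2 parE psS (bit_small _ _ _ Hb) // addbF.
by case: (odd u); case: (ps _ _).
Qed.

Local Open Scope ring_scope.

Section CC.
Variable R : rcfType.

Lemma cc_zero_l m l (s : nat -> R) u x : bit x l != bit u l -> cc m (tins l s) u x = 0.
Proof.
rewrite /cc; case: pickP => [k /eqP Hk | _] // Hb.
have Hkl : val k = l.
  case: (eqVneq (val k) l) => // Hne; exfalso; move: Hb.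
  rewrite Hk bit_flip (_ : (l == val k) = false) ?addFb ?eqxx //.
  by apply/negbTE; rewrite eq_sym.
by rewrite Hkl tins_l sqrtr0 raddf0 mulr0.
Qed.

Lemma cc_flip0 M (s : nat -> R) y' y : cc M s (flip y' 0) (flip y 0) = - cc M s y' y.
Proof.
rewrite /cc (@eq_pick _ _ (fun k : 'I_M => y == flip y' k)); last first.
  move=> k /=; rewrite flipC; apply/eqP/eqP => [/flip_inj //|->] //.
case: pickP => [k _|_]; last by rewrite oppr0.
by rewrite par_flip0 signrN mulNr.
Qed.

Lemma cc_ins m l e (s : nat -> R) z' z : (l <= m.+1)%N ->
  cc m.+2 (tins l s) (ins l e z') (ins l e z) =
  (-1) ^+ (e && ~~ (ps z' l (+) ps z l)) * cc m.+1 s z' z.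
Proof.
move=> Hl; rewrite /cc.
case: (pickP (fun k : 'I_m.+1 => z == flip z' k)) => [k' /eqP Hk' | H0'].
  have Hlt : (kmap l k' < m.+2)%N := kmap_lt _ _ _ (ltn_ord k').
  case: pickP => [k2 /eqP Hk2 | H0].
    have Ek : val k2 = kmap l k'.
      by apply: (flip_idx_inj (ins l e z')); rewrite -Hk2 flip_ins Hk'.
    rewrite Ek tins_kmap par_kmap_ins Hk' ps_flip addKb -leqNgt signr_addb.
    by rewrite mulrA [_ * (-1) ^+ (e && _)]mulrC.
  by have := H0 (Ordinal Hlt); rewrite /= flip_ins -Hk' eqxx.
rewrite mulr0; case: pickP => [k2 /eqP Hk2 | //].
case: (eqVneq (val k2) l) => Hkl.
  have := congr1 (bit^~ l) Hk2; rewrite /= bit_flip Hkl eqxx !bit_ins_l.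
  by case: (e).
have := H0' (Ordinal (unmap_lt _ _ _ (ltn_ord k2) Hl Hkl)).
by rewrite /= {1}(ins_flip_adj _ _ _ _ _ Hkl Hk2) eqxx.
Qed.

End CC.

Lemma cc_ins_none (R : rcfType) m l e (s : nat -> R) z1 x : (l <= m.+1)%N ->
  (forall k, (k < m.+1)%N -> x != ins l e (flip z1 k)) ->
  cc m.+2 (tins l s) (ins l e z1) x = 0.
Proof.
move=> Hl H; rewrite /cc; case: pickP => [k /eqP Hk | //].
case: (eqVneq (val k) l) => Hkl.
  by rewrite Hkl tins_l sqrtr0 raddf0 mulr0.
have := H (unmap l k) (unmap_lt _ _ _ (ltn_ord k) Hl Hkl).
by rewrite -flip_ins kmap_unmap // -Hk eqxx.
Qed.

Lemma img_sum (A : nmodType) (q : nat -> A) M (f : nat -> nat) x :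
  injective f ->
  img q (omap val [pick y : 'I_M | x == f y]) = \sum_(y < M | x == f y) q y.
Proof.
move=> finj; case: pickP => [y /eqP Hy | H0] /=.
  rewrite (big_pred1 y) // => y' /=; rewrite Hy; apply/eqP/eqP => [/finj/val_inj|->] //.
by rewrite big_pred0.
Qed.

Lemma sum_reindex (A : nmodType) (q : nat -> A) M N (f : nat -> nat) (P : pred nat) :
  injective f -> (forall y, (y < M)%N -> (f y < N)%N) ->
  \sum_(x < N | P x) img q (omap val [pick y : 'I_M | nat_of_ord x == f y]) =
  \sum_(y < M | P (f y)) q y.
Proof.
move=> finj fb.
rewrite (eq_bigr (fun x : 'I_N => \sum_(y < M) if nat_of_ord x == f y then q y else 0));
  last by move=> x _; rewrite img_sum // big_mkcond.
rewrite exchange_big /= [RHS]big_mkcond /=; apply: eq_bigr => y _.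
rewrite -big_mkcondr /=.
case: ifP => HP.
  rewrite (big_pred1 (Ordinal (fb _ (ltn_ord y)))) // => x /=.
  case: (eqVneq (x : nat) (f y)) => [Ex|Nx].
    by rewrite Ex HP /=; apply/esym/eqP/val_inj.
  rewrite andbF; apply/esym/negbTE; apply: contra Nx => /eqP -> //.
rewrite big_pred0 // => x; case: (eqVneq (x : nat) (f y)) => [Ex|]; last by rewrite andbF.
by rewrite Ex HP.
Qed.

Lemma qrel_lift m (A : nzRingType) (star : A -> A) (f : nat -> nat) (q : nat -> A) :
  (forall a b, star (a + b) = star a + star b) ->
  injective f ->
  (forall y, (y < 2 ^ m.+1)%N -> (f y < 2 ^ m.+2)%N) ->
  (forall y, par m.+1 (f y) = par m y) ->
  (forall y y', adj m.+1 y y' -> adj m.+2 (f y) (f y')) ->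
  Qrel m.+1 star q ->
  Qrel m.+2 star (fun x => img q (omap val [pick y : 'I_(2 ^ m.+1) | x == f y])).
Proof.
move=> starD finj fb fpar fadj [Hproj HU HV Hort].
have star0 : star 0 = 0.
  have := starD 0 0; rewrite addr0 => H.
  by apply: (addrI (star 0)); rewrite addr0 -H.
split.
- move=> x _; case: pickP => [y _ | _] /=; last by rewrite mul0r star0.
  exact: Hproj.
- rewrite (@sum_reindex _ q (2 ^ m.+1) (2 ^ m.+2) f (fun x => ~~ par m.+1 x)) // -HU; apply: eq_bigl => y; by rewrite fpar.
- rewrite (@sum_reindex _ q (2 ^ m.+1) (2 ^ m.+2) f (fun x => par m.+1 x)) // -HV; apply: eq_bigl => y; by rewrite fpar.
- move=> u v _ _ pu pv nadj.
  case: pickP => [y /eqP Hy | _] /=; last by rewrite mul0r.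
  case: pickP => [y' /eqP Hy' | _] /=; last by rewrite mulr0.
  apply: Hort => //.
  + by rewrite -fpar -Hy.
  + by rewrite -fpar -Hy'.
  + by apply: contra nadj; rewrite Hy Hy'; apply: fadj.
Qed.

Section Mx.
Variable R : rcfType.
Variable m : nat.
Local Notation C := (R[i]).

Definition Uf (f : nat -> nat) (d : nat -> C) : 'M[C]_(2 ^ m, 2 ^ m.+1) :=
  \matrix_(b, a) (if uenum m.+2 a == f (uenum m.+1 b) then d (uenum m.+1 b) else 0).

Lemma mulUf f d n (X : 'M[C]_(2 ^ m.+1, n)) (b : 'I_(2 ^ m)) j (a0 : 'I_(2 ^ m.+1)) :
  uenum m.+2 a0 = f (uenum m.+1 b) ->
  (Uf f d *m X) b j = d (uenum m.+1 b) * X a0 j.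
Proof.
move=> Ha0; rewrite mxE (bigD1 a0) //= mxE Ha0 eqxx big1 ?addr0 // => a Ha.
rewrite mxE (_ : (_ == _) = false) ?mul0r //; apply/negbTE.
by apply: contra Ha; rewrite -Ha0 => /eqP/uenum_inj Hv; apply/eqP/val_inj.
Qed.

Lemma mulUfA g e n (X : 'M[C]_(n, 2 ^ m.+1)) i (b : 'I_(2 ^ m)) (a0 : 'I_(2 ^ m.+1)) :
  uenum m.+2 a0 = g (uenum m.+1 b) ->
  (X *m adjmx (Uf g e)) i b = X i a0 * conjc (e (uenum m.+1 b)).
Proof.
move=> Ha0; rewrite mxE (bigD1 a0) //= /adjmx !mxE Ha0 eqxx big1 ?addr0 // => a Ha.
rewrite !mxE (_ : (_ == _) = false) ?conjc0 ?mulr0 //; apply/negbTE.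
by apply: contra Ha; rewrite -Ha0 => /eqP/uenum_inj Hv; apply/eqP/val_inj.
Qed.

Arguments mulUf {f d n X b j a0}.
Arguments mulUfA {g e n X i b a0}.

Lemma ex_a0 (f : nat -> nat) (b : 'I_(2 ^ m)) :
  (forall y, (y < 2 ^ m.+1)%N -> (f y < 2 ^ m.+2)%N) ->
  (forall y, par m.+1 (f y) = par m y) ->
  exists a0 : 'I_(2 ^ m.+1), uenum m.+2 a0 = f (uenum m.+1 b).
Proof.
move=> fb fpar.
have Hy := uenum_small _ _ (ltn_ord b).
have [Hlt Heq] := uenum_half (m.+1) _ (fb _ Hy) (etrans (fpar _) (uenum_par _ _ (ltn_ord b))).
by exists (Ordinal Hlt).
Qed.

Arguments ex_a0 {f} b.

Lemma adjmx_col p1 p2 q (A : 'M[C]_(p1, q)) (B : 'M[C]_(p2, q)) :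
  adjmx (col_mx A B) = row_mx (adjmx A) (adjmx B).
Proof. by rewrite /adjmx map_col_mx tr_col_mx. Qed.

Lemma sgnK (b : bool) : (-1) ^+ b * conjc ((-1) ^+ b) = 1 :> C.
Proof. by rewrite rmorph_sign -signr_addb addbb. Qed.

Lemma UUdiag f d :
  injective f ->
  (forall y, (y < 2 ^ m.+1)%N -> (f y < 2 ^ m.+2)%N) ->
  (forall y, par m.+1 (f y) = par m y) ->
  (forall y, d y * conjc (d y) = 1) ->
  Uf f d *m adjmx (Uf f d) = 1%:M.
Proof.
move=> finj fb fpar dK; apply/matrixP => b1 b2.
have [a1 Ha1] := ex_a0 b1 fb fpar.
rewrite (mulUf Ha1) /adjmx !mxE Ha1.
case: (eqVneq b1 b2) => [<-|Hne]; first by rewrite !eqxx dK.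
rewrite (_ : (_ == _) = false) ?conjc0 ?mulr0 //; apply/negbTE.
by apply: contra Hne => /eqP/finj/uenum_inj/val_inj ->.
Qed.

Lemma UUcross f d g e :
  (forall y, (y < 2 ^ m.+1)%N -> (f y < 2 ^ m.+2)%N) ->
  (forall y, par m.+1 (f y) = par m y) ->
  (forall y y', f y != g y') ->
  Uf f d *m adjmx (Uf g e) = 0.
Proof.
move=> fb fpar fg; apply/matrixP => b1 b2.
have [a1 Ha1] := ex_a0 b1 fb fpar.
by rewrite (mulUf Ha1) /adjmx !mxE Ha1 (negbTE (fg _ _)) conjc0 mulr0.
Qed.

Lemma mul3 f d g e (M : 'M[C]_(2 ^ m.+1)) (b1 b2 : 'I_(2 ^ m)) (a1 a2 : 'I_(2 ^ m.+1)) :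
  uenum m.+2 a1 = f (uenum m.+1 b1) -> uenum m.+2 a2 = g (uenum m.+1 b2) ->
  (Uf f d *m M *m adjmx (Uf g e)) b1 b2 =
  d (uenum m.+1 b1) * M a1 a2 * conjc (e (uenum m.+1 b2)).
Proof.
move=> H1 H2; rewrite -mulmxA (mulUf H1) (mulUfA H2) mulrA //.
Qed.

End Mx.

Lemma mulmx1C_cast (K : comPzRingType) p q (E : p = q) (A : 'M[K]_(p, q)) (B : 'M[K]_(q, p)) :
  A *m B = 1%:M -> B *m A = 1%:M.
Proof. by subst q; apply: mulmx1C. Qed.
Arguments mul3 {R m f d g e M b1 b2 a1 a2}.
Arguments ex_a0 {m f} b.
Arguments UUdiag {R m}.
Arguments UUcross {R m}.

Theorem lemma4p11 (n l : nat) (hn : (2 <= n)%N) (hl : (l < n)%N) :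
  (forall (A : nzRingType) (star : A -> A),
     (forall a b, star (a + b) = star a + star b) ->
     (forall a b, star (a * b) = star b * star a) ->
     (forall a, star (star a) = a) ->
     forall q : nat -> A, Qrel n.-1 star q ->
       Qrel n star (fun x => img q (preP n l x)) /\
       Qrel n star (fun x => img q (preM n l x)))
  /\
  (forall R : rcfType, forall s : nat -> R, simplex n.-1 s ->
     exists U : 'M[R[i]]_(2 ^ n.-1.-1 + 2 ^ n.-1.-1, 2 ^ n.-1),
       U *m adjmx U = 1%:M /\ adjmx U *m U = 1%:M /\
       forall x, (x < 2 ^ n)%N ->
         U *m rho n (tins l s) x *m adjmx U =
         block_mx (img (rho n.-1 s) (preP n l x)) 0
                  0 (img (rho n.-1 s) (preM n l x))).
Proof.
case: n hn hl => [|[|m]] // _ hl.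
have Hl : (l <= m.+1)%N by [].
pose fP := fun y => ins l true (flip y 0).
pose fM := fun y => ins l false y.
have fP_inj : injective fP by move=> y1 y2 /ins_inj /flip_inj.
have fM_inj : injective fM by move=> y1 y2 /ins_inj.
have fP_b : forall y, (y < 2 ^ m.+1)%N -> (fP y < 2 ^ m.+2)%N.
  by move=> y Hy; apply: ins_small => //; apply: flip_small.
have fM_b : forall y, (y < 2 ^ m.+1)%N -> (fM y < 2 ^ m.+2)%N.
  by move=> y Hy; apply: ins_small.
have fP_par : forall y, par m.+1 (fP y) = par m y.
  move=> y; rewrite !parE /fP ps_ins.
  have -> : (m.+2 <= l)%N = false by lia.
  by rewrite /= ps_flip /= -addbA addbb addbF.
have fM_par : forall y, par m.+1 (fM y) = par m y.
  move=> y; rewrite !parE /fM ps_ins.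
  have -> : (m.+2 <= l)%N = false by lia.
  by rewrite /= addbF.
have fP_adj : forall y y', adj m.+1 y y' -> adj m.+2 (fP y) (fP y').
  move=> y y' /existsP [k /eqP ->]; apply/existsP.
  exists (Ordinal (kmap_lt l _ _ (ltn_ord k))); apply/eqP.
  by rewrite /fP /= flip_ins flipC.
have fM_adj : forall y y', adj m.+1 y y' -> adj m.+2 (fM y) (fM y').
  move=> y y' /existsP [k /eqP ->]; apply/existsP.
  exists (Ordinal (kmap_lt l _ _ (ltn_ord k))); apply/eqP.
  by rewrite /fM /= flip_ins.
have fPM : forall y y', fP y != fM y'.
  move=> y y'; apply/negP => /eqP /(congr1 (bit^~ l)).
  by rewrite /fP /fM !bit_ins_l.
split.
  move=> A star sD _ _ q Hq; split.
    exact (@qrel_lift m A star fP q sD fP_inj fP_b fP_par fP_adj Hq).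
  exact (@qrel_lift m A star fM q sD fM_inj fM_b fM_par fM_adj Hq).
move=> R s _.
pose dP := fun y => (-1) ^+ (ps (flip y 0) l) : R[i].
pose dM := fun _ : nat => 1 : R[i].
pose Up := Uf R m fP dP.
pose Um := Uf R m fM dM.
have dPK : forall y, dP y * conjc (dP y) = 1 by move=> y; apply: sgnK.
have cdM : forall y, conjc (dM y) = 1 by move=> y; exact: conjc1.
have eM : forall y, dM y = 1 by [].
have c1 : (1 -i* 0)%C = 1 :> R[i] by exact: conjc1.
have dMK : forall y, dM y * conjc (dM y) = 1 by move=> y; rewrite /dM conjc1 mulr1.
have UU : col_mx Up Um *m adjmx (col_mx Up Um) = 1%:M.
  rewrite adjmx_col mul_col_row [RHS](scalar_mx_block (2 ^ m) (2 ^ m)).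
  rewrite UUdiag // UUdiag // UUcross // UUcross //.
  by move=> y y'; rewrite eq_sym.
exists (col_mx Up Um); split => //; split.
  have E : (2 ^ m + 2 ^ m = 2 ^ m.+1)%N by rewrite expnS mul2n addnn.
  exact (mulmx1C_cast _ _ _ E _ _ UU).
move=> x Hx.
rewrite adjmx_col mul_col_mx mul_col_row.
congr (block_mx _ _ _ _); apply/matrixP => b1 b2.
- have [a1 Ha1] := ex_a0 b1 fP_b fP_par.
  have [a2 Ha2] := ex_a0 b2 fP_b fP_par.
  rewrite (mul3 Ha1 Ha2) [rho _ _ x]/rho mxE Ha1 Ha2.
  set y1 := uenum m.+1 b1; set y2 := uenum m.+1 b2.
  have Hy1 : (y1 < 2 ^ m.+1)%N := uenum_small _ _ (ltn_ord b1).
  rewrite /preP; case: pickP => [y /eqP Hy | H0] /=.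
    have -> : x = fP y by [].
    rewrite fP_par /rho mxE -/y1 -/y2.
    case: (par m y) => /=.
      rewrite /fP !cc_ins // !cc_flip0 /dP !rmorphM !rmorphN !rmorph_sign /=.
      case: (ps (flip y1 0) l); case: (ps (flip y2 0) l); case: (ps (flip y 0) l);
        rewrite /= ?expr0 ?expr1; ring.
    rewrite !(inj_eq fP_inj).
    case: (eqVneq y1 y) => [E1|N1]; case: (eqVneq y2 y) => [E2|N2] /=;
      rewrite ?mulr0 ?mul0r //.
    by rewrite E1 E2 mulr1 dPK.
  rewrite mxE.
  case: (par m.+1 x) => /=.
    have -> : cc m.+2 (tins l s) (fP y1) x = 0.
      rewrite /fP; apply: cc_ins_none => // k Hk; rewrite flipC.
      by have := H0 (Ordinal (flip_small _ _ _ Hy1 Hk)) => /negbT.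
    by rewrite mul0r mulr0 mul0r.
  rewrite (_ : (fP y1 == x) = false) ?mulr0 ?mul0r //.
  by rewrite eq_sym; exact: (H0 (Ordinal Hy1)).
- have [a1 Ha1] := ex_a0 b1 fP_b fP_par.
  have [a2 Ha2] := ex_a0 b2 fM_b fM_par.
  rewrite (mul3 Ha1 Ha2) [rho _ _ x]/rho !mxE Ha1 Ha2.
  set y1 := uenum m.+1 b1; set y2 := uenum m.+1 b2.
  case: (par m.+1 x) => /=.
    case Hb: (bit x l).
      have -> : cc m.+2 (tins l s) (fM y2) x = 0.
        by apply: cc_zero_l; rewrite Hb /fM bit_ins_l.
      by rewrite conjc0 !mulr0 mul0r.
    have -> : cc m.+2 (tins l s) (fP y1) x = 0.
      by apply: cc_zero_l; rewrite Hb /fP bit_ins_l.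
    by rewrite !mul0r mulr0 mul0r.
  rewrite (_ : (fP y1 == x) && (fM y2 == x) = false); first by rewrite mulr0 mul0r.
  apply/negbTE/andP => [[/eqP E1 /eqP E2]]; move: (fPM y1 y2); by rewrite E1 E2 eqxx.
- have [a1 Ha1] := ex_a0 b1 fM_b fM_par.
  have [a2 Ha2] := ex_a0 b2 fP_b fP_par.
  rewrite (mul3 Ha1 Ha2) [rho _ _ x]/rho !mxE Ha1 Ha2.
  set y1 := uenum m.+1 b1; set y2 := uenum m.+1 b2.
  case: (par m.+1 x) => /=.
    case Hb: (bit x l).
      have -> : cc m.+2 (tins l s) (fM y1) x = 0.
        by apply: cc_zero_l; rewrite Hb /fM bit_ins_l.
      by rewrite !mul0r mulr0 mul0r.
    have -> : cc m.+2 (tins l s) (fP y2) x = 0.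
      by apply: cc_zero_l; rewrite Hb /fP bit_ins_l.
    by rewrite conjc0 !mulr0 mul0r.
  rewrite (_ : (fM y1 == x) && (fP y2 == x) = false); first by rewrite mulr0 mul0r.
  apply/negbTE/andP => [[/eqP E1 /eqP E2]]; move: (fPM y2 y1); by rewrite E1 E2 eqxx.
- have [a1 Ha1] := ex_a0 b1 fM_b fM_par.
  have [a2 Ha2] := ex_a0 b2 fM_b fM_par.
  rewrite (mul3 Ha1 Ha2) [rho _ _ x]/rho mxE Ha1 Ha2.
  set y1 := uenum m.+1 b1; set y2 := uenum m.+1 b2.
  have Hy1 : (y1 < 2 ^ m.+1)%N := uenum_small _ _ (ltn_ord b1).
  rewrite /preM; case: pickP => [y /eqP Hy | H0] /=.
    have -> : x = fM y by [].
    rewrite fM_par /rho mxE -/y1 -/y2 c1 eM mulr1 mul1r.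
    case: (par m y) => /=.
      by rewrite /fM !cc_ins // andFb expr0 !mul1r.
    rewrite !(inj_eq fM_inj).
    by case: (eqVneq y1 y) => [E1|N1]; case: (eqVneq y2 y) => [E2|N2].
  rewrite mxE.
  case: (par m.+1 x) => /=.
    have -> : cc m.+2 (tins l s) (fM y1) x = 0.
      rewrite /fM; apply: cc_ins_none => // k Hk.
      by have := H0 (Ordinal (flip_small _ _ _ Hy1 Hk)) => /negbT.
    by rewrite mul0r mulr0 mul0r.
  rewrite (_ : (fM y1 == x) = false) ?mulr0 ?mul0r //.
  by rewrite eq_sym; exact: (H0 (Ordinal Hy1)).
Qed.
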